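(* For any positive integer $k$, there exist connected graphs $H$ and $G$ with $H \subset G$ such that both $\frac{\dim_f(H)}{\dim_f(G)}$ and $\frac{\dim_{k,f}(H)}{\dim_{k,f}(G)}$ can be arbitrarily large; that is, for every real $C>0$ there exist connected graphs $H\subset G$ with $\frac{\dim_f(H)}{\dim_f(G)}>C$ and $\frac{\dim_{k,f}(H)}{\dim_{k,f}(G)}>C$.
   Context: $H\subset G$ means $H$ is a subgraph of $G$. $d(x,y)$ is the distance in $G$. For a function $g$ on $V(G)$ and $U\subseteq V(G)$, $g(U)=\sum_{s\in U}g(s)$. $R\{x,y\}=\{z: d(x,z)\ne d(y,z)\}$; $g:V(G)\to[0,1]$ is a resolving function if $g(R\{x,y\})\ge1$ for all distinct $x,y$; $\dim_f(G)$ is the minimum of $g(V(G))$ over resolving functions. For a positive integer $k$, $d_k(x,y)=\min\{d(x,y),k+1\}$, $R_k\{x,y\}=\{z: d_k(x,z)\neq d_k(y,z)\}$; $h:V(G)\to[0,1]$ is a $k$-truncated resolving function if $h(R_k\{x,y\})\ge 1$ for all distinct $x,y$, and $\dim_{k,f}(G)$ is the minimum of $h(V(G))$ over such $h$. *)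

(* Defs.v *)
From HB Require Import structures.
From mathcomp Require Import all_boot all_order all_algebra.
From mathcomp Require Import all_classical all_reals.
Set Implicit Arguments. Unset Strict Implicit. Unset Printing Implicit Defensive.
Import Order.TTheory GRing.Theory Num.Theory.
Local Open Scope ring_scope.
Local Open Scope classical_set_scope.

Record graph := Graph {
  gV : finType;
  adj : rel gV;
  adj_sym : symmetric adj;
  adj_irr : irreflexive adj }.

Definition reachn (G : graph) (n : nat) (x y : gV G) : bool :=
  [exists p : n.-tuple (gV G), path (@adj G) x p && (last x p == y)].

(* Graph distance: least n (< #|V|) with a walk of length n from x to y.
   For connected graphs this is the usual shortest-path distance. *)
Definition dist (G : graph) (x y : gV G) : nat :=
  find (fun n => @reachn G n x y) (iota 0 #|gV G|).

Definition connected (G : graph) : Prop :=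
  forall x y : gV G, connect (@adj G) x y.

Definition subgraph (H G : graph) : Prop :=
  exists f : gV H -> gV G, injective f /\
    forall x y, adj x y -> adj (f x) (f y).

Definition distk (k : nat) (G : graph) (x y : gV G) : nat :=
  minn (dist x y) k.+1.

Definition resolving_wrt (R : realType) (G : graph)
    (D : gV G -> gV G -> nat) (g : gV G -> R) : Prop :=
  (forall z, 0 <= g z <= 1) /\
  forall x y : gV G, x != y ->
    1 <= \sum_(z : gV G | D x z != D y z) g z.

Definition resolving_fun (R : realType) (G : graph) (g : gV G -> R) : Prop :=
  @resolving_wrt R G (@dist G) g.

Definition ktrunc_resolving_fun (R : realType) (k : nat) (G : graph)
    (g : gV G -> R) : Prop :=
  @resolving_wrt R G (@distk k G) g.

(* dim_f(G) = min of g(V) over resolving functions (the minimum is attained;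
   we take the infimum). *)
Definition dimf (R : realType) (G : graph) : R :=
  inf [set s : R | exists g : gV G -> R, resolving_fun g /\ s = \sum_(z : gV G) g z].

Definition dimkf (R : realType) (k : nat) (G : graph) : R :=
  inf [set s : R | exists g : gV G -> R, ktrunc_resolving_fun k g /\
                   s = \sum_(z : gV G) g z].

(* Main.v *)
Require Import Defs.
From HB Require Import structures.
From mathcomp Require Import all_boot all_order all_algebra.
From mathcomp Require Import all_classical all_reals.
From mathcomp Require Import zify ring lra.
Import Order.TTheory GRing.Theory Num.Theory.
Local Open Scope ring_scope.

Section Generic.
Variable G : graph.
Implicit Types x y z c : gV G.

Lemma reach0 x y : reachn 0 x y = (x == y).
Proof.
apply/existsP/idP => [[p /andP[_ /eqP <-]]|/eqP <-].
  by rewrite tuple0.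
by exists [tuple]; rewrite /= eqxx.
Qed.

Lemma reach1 x y : reachn 1 x y = adj x y.
Proof.
apply/existsP/idP => [[[s Hs] /andP[Hp /eqP Hl]]|h].
  move: Hs Hp Hl => /=; case: s => [|a [|b s]] //= _; by rewrite andbT => ? <-.
by exists [tuple y]; rewrite /= h eqxx.
Qed.

Lemma reach2 x c y : adj x c -> adj c y -> reachn 2 x y.
Proof. by move=> h1 h2; apply/existsP; exists [tuple c; y]; rewrite /= h1 h2 eqxx. Qed.

Lemma dist_eq x y n : (n < #|gV G|)%N -> (forall m, (m < n)%N -> ~~ reachn m x y) ->
  reachn n x y -> dist x y = n.
Proof.
move=> hn hlt hr; rewrite /dist.
set P := (fun n => reachn n x y).
have hhas : has P (iota 0 #|gV G|) by apply/hasP; exists n; rewrite ?mem_iota.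
have := nth_find 0 hhas.
have hf := hhas; rewrite has_find size_iota in hf.
rewrite nth_iota // add0n => hP.
case: (ltngtP (find P (iota 0 #|gV G|)) n) => h //.
  by case/negP: (hlt _ h); exact: hP.
have := before_find 0 h; rewrite nth_iota // add0n.
by rewrite /P hr.
Qed.

Lemma dist_refl x : dist x x = 0%N.
Proof.
apply: dist_eq => //; last by rewrite reach0.
by apply/card_gt0P; exists x.
Qed.

Lemma dist0 x y : dist x y = 0%N -> x = y.
Proof.
rewrite /dist => h.
set P := (fun n => reachn n x y).
have h0 : (0 < #|gV G|)%N by apply/card_gt0P; exists x.
have hhas : has P (iota 0 #|gV G|) by rewrite has_find size_iota h.
have := nth_find 0 hhas; rewrite h nth_iota // /P reach0.
by move/eqP.
Qed.

Lemma dist_dom c (hc : forall z, z != c -> adj c z) x y :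
  dist x y = if x == y then 0%N else if adj x y then 1%N else 2%N.
Proof.
case: eqP => [<-|/eqP nxy]; first exact: dist_refl.
case: ifP => hxy.
  apply: dist_eq; last by rewrite reach1.
    by apply/card_gt1P; exists x, y.
  by case => // _; rewrite reach0.
have xc : x != c.
  apply/negP => /eqP exc; subst x; move: hxy; rewrite hc //.
  by rewrite eq_sym.
have yc : y != c.
  apply/negP => /eqP eyc; subst y; move: hxy; rewrite adj_sym hc //.
have hxc : adj x c by rewrite adj_sym hc.
apply: dist_eq; last by apply: (@reach2 _ c) => //; exact: hc.
  by apply/card_gt2P; exists x, y, c; split => //; split => //; rewrite eq_sym.
by case => [|[|]] // _; rewrite ?reach0 ?reach1 ?hxy.
Qed.

Lemma connected_dom c (hc : forall z, z != c -> adj c z) : connected G.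
Proof.
move=> x y; apply: (@connect_trans _ _ c).
  case: (eqVneq x c) => [->|h]; first exact: connect0.
  by apply: connect1; rewrite adj_sym hc.
case: (eqVneq y c) => [->|h]; first exact: connect0.
by apply: connect1; rewrite hc.
Qed.

Lemma distk_dom k (hk : (0 < k)%N) c (hc : forall z, z != c -> adj c z) :
  @distk k G = @dist G.
Proof.
apply: funext => x; apply: funext => y.
rewrite /distk (@dist_dom c hc); apply/minn_idPl.
by case: ifP => _ //; case: ifP => _ //; rewrite ltnS.
Qed.

Variable R : realType.

Lemma sum_sub (g : gV G -> R) (P : pred (gV G)) : (forall z, 0 <= g z) ->
  \sum_(z | P z) g z <= \sum_z g z.
Proof.
move=> h; rewrite big_mkcond /=; apply: ler_sum => z _.
by case: ifP.
Qed.

Lemma sum_ge1 (g : gV G -> R) (P : pred (gV G)) z0 : P z0 -> 1 <= g z0 ->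
  (forall z, 0 <= g z) -> 1 <= \sum_(z | P z) g z.
Proof.
move=> hP h1 h0; rewrite (bigD1 z0) //=.
apply: (le_trans h1); rewrite lerDl; apply: sumr_ge0 => *; exact: h0.
Qed.

Lemma resolving_one : resolving_fun (fun _ : gV G => (1 : R)).
Proof.
split => [z|x y nxy]; first by rewrite ler01 lexx.
apply: (@sum_ge1 _ _ x) => //.
rewrite dist_refl eq_sym; apply/negP => /eqP /dist0 /eqP.
by rewrite eq_sym (negbTE nxy).
Qed.

Lemma dimf_le (g : gV G -> R) : resolving_fun g -> dimf R G <= \sum_z g z.
Proof.
move=> hg; apply: ge_inf; last by exists g.
exists 0 => s [h [[h0 _] ->]]; apply: sumr_ge0 => z _; by case/andP: (h0 z).
Qed.

Lemma dimf_ge (a : R) : (forall g : gV G -> R, resolving_fun g -> a <= \sum_z g z) -> a <= dimf R G.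
Proof.
move=> h; apply: lb_le_inf.
  by exists (\sum_(z : gV G) (1 : R)), (fun _ => 1); split => //; exact: resolving_one.
by move=> s [g [hg ->]]; exact: h.
Qed.

Lemma dimf_ge1 x y : x != y -> 1 <= dimf R G.
Proof.
move=> nxy; apply: dimf_ge => g [h0 hr].
apply: (le_trans (hr x y nxy)); apply: sum_sub => z; by case/andP: (h0 z).
Qed.

End Generic.

Definition VT (t : nat) : finType := (unit + ('I_t + {set 'I_t}))%type.

Definition adjG t (x y : VT t) : bool :=
  match x, y with
  | inl _, inr _ => true
  | inr _, inl _ => true
  | inr (inl s), inr (inr A) => s \in A
  | inr (inr A), inr (inl s) => s \in A
  | _, _ => false
  end.

Definition adjH t (x y : VT t) : bool :=
  match x, y with
  | inl _, inr _ => true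
  | inr _, inl _ => true
  | _, _ => false
  end.

Lemma adjG_sym t : symmetric (@adjG t).
Proof. by move=> [[]|[s|A]] [[]|[s'|B]]. Qed.
Lemma adjG_irr t : irreflexive (@adjG t).
Proof. by move=> [[]|[s|A]]. Qed.
Lemma adjH_sym t : symmetric (@adjH t).
Proof. by move=> [[]|[s|A]] [[]|[s'|B]]. Qed.
Lemma adjH_irr t : irreflexive (@adjH t).
Proof. by move=> [[]|[s|A]]. Qed.

Definition GG t : graph := @Graph (VT t) (@adjG t) (@adjG_sym t) (@adjG_irr t).
Definition HH t : graph := @Graph (VT t) (@adjH t) (@adjH_sym t) (@adjH_irr t).

Lemma domG t : forall z : gV (GG t), z != inl tt -> adj (inl tt : gV (GG t)) z.
Proof. by move=> [[]|[s|A]]; rewrite ?eqxx. Qed.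
Lemma domH t : forall z : gV (HH t), z != inl tt -> adj (inl tt : gV (HH t)) z.
Proof. by move=> [[]|[s|A]]; rewrite ?eqxx. Qed.

Lemma card_VT t : #|VT t| = (1 + (t + 2 ^ t))%N.
Proof.
rewrite /VT !card_sum card_unit card_ord -cardsT -powersetT card_powerset.
by rewrite cardsT card_ord.
Qed.

Section Dims.
Variable R : realType.
Variable t : nat.

Definition gG (z : VT t) : R := if z is inr (inr _) then 0 else 1.

Lemma gG_res : resolving_fun (G := GG t) gG.
Proof.
have h0 : forall z, 0 <= gG z by case=> [[]|[s|A]]; rewrite /gG ?ler01 ?lexx.
split => [z|x y nxy]; first by rewrite h0; case: z => [[]|[s|A]]; rewrite /gG ?lexx ?ler01.
have dx : forall a b : gV (GG t), a != b -> dist a b != 0%N.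
  by move=> a b nab; apply/negP => /eqP /dist0 /eqP; rewrite (negbTE nab).
case hx: (gG x == 1).
  apply: (@sum_ge1 _ _ _ _ x) => //; last by rewrite (eqP hx).
  by rewrite dist_refl eq_sym dx // eq_sym.
case hy: (gG y == 1).
  apply: (@sum_ge1 _ _ _ _ y) => //; last by rewrite (eqP hy).
  by rewrite dist_refl dx.
move: x y nxy hx hy => [[]|[s|A]] // [[]|[s'|B]] //; rewrite /gG ?eqxx // => nAB _ _.
case: (boolP [exists s, (s \in A) != (s \in B)]) => [/existsP [s hs]|/existsPn h]; last first.
  move: nAB; suff -> : A = B by rewrite eqxx.
  by apply/setP => s; move: (h s); rewrite negbK => /eqP.
apply: (@sum_ge1 _ _ _ _ (inr (inl s) : gV (GG t))) => //.
rewrite !(@dist_dom _ _ (@domG t)) /=.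
by move: hs; case: (s \in A); case: (s \in B).
Qed.

Lemma sum_gG : \sum_(z : VT t) gG z = 1 + t%:R.
Proof.
rewrite !big_sumType /= [X in _ + (_ + X)]big1 // addr0 !sumr_const card_ord card_unit.
done.
Qed.

Lemma dimf_GG : dimf R (GG t) <= 1 + t%:R.
Proof. have := @dimf_le (GG t) R gG gG_res; by rewrite sum_gG. Qed.

End Dims.

Section DimH.
Variable R : realType.
Variable t : nat.

Lemma sum_pred1 (T : finType) (a : T) (r : R) :
  \sum_(z : T) (if z == a then r else 0) = r.
Proof. by rewrite -big_mkcond big_pred1_eq. Qed.

Lemma pairH (g : gV (HH t) -> R) : resolving_fun g ->
  forall a b : gV (HH t), a != inl tt -> b != inl tt -> a != b -> 1 <= g a + g b.
Proof.
move=> [h0 hr] a b ha hb nab.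
apply: (le_trans (hr a b nab)).
rewrite -(@sum_pred1 _ a (g a)) -(@sum_pred1 _ b (g b)) -big_split big_mkcond /=.
apply: ler_sum => z _.
case: (eqVneq z a) => [->|za].
  rewrite ?eqxx (negbTE nab) addr0; case/andP: (h0 a) => ga _; by case: ifP.
case: (eqVneq z b) => [->|zb].
  rewrite ?eqxx add0r; case/andP: (h0 b) => gb _; by case: ifP.
case: ifP => [hP|_]; last by rewrite addr0.
move: hP.
have az : a != z by rewrite eq_sym.
have bz : b != z by rewrite eq_sym.
rewrite !(@dist_dom _ _ (@domH t)) (negbTE az) (negbTE bz).
move: a b ha hb {nab za zb az bz hr} => [[]|[s|A]] // [[]|[s'|B]] //; 
  by move: z => [[]|[s2|A2]] //=; rewrite eqxx.
Qed.

Lemma dimf_HH : ((1 + (t + 2 ^ t))%:R - 2) / 2 <= dimf R (HH t).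
Proof.
apply: dimf_ge => g hg.
have h0 : forall z, 0 <= g z by move=> z; case: hg => h _; case/andP: (h z).
pose c : gV (HH t) := inl tt.
have [a0 ha0] : exists a0 : gV (HH t), forall z, z != c -> z != a0 -> 1/2 <= g z.
  case: (boolP [exists a : gV (HH t), (a != c) && (g a < 1/2)]) =>
     [/existsP [a /andP [hac hlt]]|/existsPn h]; last first.
    exists c => z hz _; move: (h z); rewrite hz /= -leNgt; done.
  exists a => z hzc hza.
  have h1 := @pairH g hg a z hac hzc ltac:(by rewrite eq_sym).
  lra.
have hpt : forall z, 1/2 - (if z == c then 1/2 else 0) - (if z == a0 then 1/2 else 0) <= g z.
  move=> z; have := h0 z; have := ha0 z.
  case: (z == c); case: (z == a0) => /=; try lra.
apply: le_trans (ler_sum _ (fun z _ => hpt z)).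
rewrite !sumrB !sum_pred1 sumr_const.
have -> : #|[pred _ : gV (HH t) | true]| = (1 + (t + 2 ^ t))%N.
  by rewrite cardT -cardE card_VT.
rewrite -[_ *+ _]mulr_natl.
lra.
Qed.

End DimH.

Lemma nat_bound (N : nat) : (0 < N)%N ->
  (2 * N * ((4 * N) * 2 + 1) + 2 <= 1 + ((4 * N) * 2 + 2 ^ ((4 * N) * 2)))%N.
Proof.
move=> hN; have := ltn_expl (4 * N) (isT : (1 < 2)%N).
have -> : (2 ^ (4 * N * 2) = 2 ^ (4 * N) * 2 ^ (4 * N))%N by rewrite -expnD addnn -mul2n mulnC.
move: (2 ^ (4 * N))%N => X hX.
have hX2 : ((4 * N + 1) * (4 * N + 1) <= X * X)%N.
  by apply: leq_mul; lia.
lia.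
Qed.

Theorem corollary4p2 (R : realType) (k : nat) (hk : (0 < k)%N) (C : R) (hC : 0 < C) :
  exists H G : graph,
    [/\ connected H, connected G, subgraph H G,
        C < dimf R H / dimf R G &
        C < dimkf R k H / dimkf R k G].
Proof.
set N := (Num.trunc C).+1.
have hCN : C < N%:R by exact: truncnS_gt.
set t := ((4 * N) * 2)%N.
exists (HH t), (GG t).
have eH : dimkf R k (HH t) = dimf R (HH t).
  by rewrite /dimkf /ktrunc_resolving_fun (@distk_dom _ k hk _ (@domH t)).
have eG : dimkf R k (GG t) = dimf R (GG t).
  by rewrite /dimkf /ktrunc_resolving_fun (@distk_dom _ k hk _ (@domG t)).
have hratio : C < dimf R (HH t) / dimf R (GG t).
  have hG1 : 1 <= dimf R (GG t).
    exact: (@dimf_ge1 (GG t) R (inl tt) (inr (inl (Ordinal (isT : (0 < t)%N))))).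
  have hGt := @dimf_GG R t.
  have hH := @dimf_HH R t.
  have hn := @nat_bound N isT.
  move: hn; rewrite -(ler_nat R) !natrD !natrM => hn.
  move: hH; rewrite !natrD => hH.
  rewrite ltr_pdivlMr; last by lra.
  have hNr : 0 <= N%:R :> R by apply: ler0n.
  have ht : 0 <= t%:R :> R by apply: ler0n.
  rewrite /t natrM in hn hH hGt *.
  nra.
split.
- exact: connected_dom (@domH t).
- exact: connected_dom (@domG t).
- exists id; split => // x y; by move: x y => [[]|[s|A]] [[]|[s'|B]].
- exact: hratio.
- by rewrite eH eG.
Qed.
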